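(* Let $\mathfrak g\xrightarrow{\mu}\mathfrak h$ be a crossed module of Lie algebras with action $\mathcal L$, $\phi:W\to V$ linear, and $(\rho_0^1,\rho_0^0,\rho_1)$ a 2-representation on $\phi$. For $k\in\{1,2\}$ let $(\omega_k,\alpha_k,\varphi_k)\in(\bigwedge^2\mathfrak h^*\otimes V)\oplus(\mathfrak h^*\otimes\mathfrak g^*\otimes W)\oplus(\mathfrak g^*\otimes V)$ be triples such that the following data define 2-extensions $E_k$ of $\mathfrak g\xrightarrow{\mu}\mathfrak h$ by $W\xrightarrow{\phi}V$: $\mathfrak e_0=\mathfrak h\oplus V$ with bracket $[(y_0,v_0),(y_1,v_1)]=([y_0,y_1],\rho_0^0(y_0)v_1-\rho_0^0(y_1)v_0-\omega_k(y_0,y_1))$; $\mathfrak e_1=\mathfrak g\oplus W$ with bracket $[(x_0,w_0),(x_1,w_1)]=([x_0,x_1],\rho_0^1(\mu(x_0))w_1-\rho_0^1(\mu(x_1))w_0-\omega_k'(x_0,x_1))$, where $\omega_k'(x_0,x_1)=\rho_1(x_1)\varphi_k(x_0)+\alpha_k(\mu(x_0);x_1)$; structure map $\epsilon_k(x,w)=(\mu(x),\phi(w)+\varphi_k(x))$; action $\mathcal L^{\epsilon_k}_{(y,v)}(x,w)=(\mathcal L_yx,\rho_0^1(y)w-\rho_1(x)v-\alpha_k(y;x))$; with the obvious inclusions and first-coordinate projections. Then $E_1$ and $E_2$ are equivalent if and only if there are linear maps $\lambda_0:\mathfrak h\to V$ and $\lambda_1:\mathfrak g\to W$ with (a) $\omega_2(y_0,y_1)-\omega_1(y_0,y_1)=\rho_0^0(y_0)\lambda_0(y_1)-\rho_0^0(y_1)\lambda_0(y_0)-\lambda_0([y_0,y_1])$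 for all $y_0,y_1\in\mathfrak h$; (b) $\alpha_2(y;x)-\alpha_1(y;x)=\rho_0^1(y)(\lambda_1(x))-\lambda_1(\mathcal L_yx)-\rho_1(x)(\lambda_0(y))$ for all $y\in\mathfrak h$, $x\in\mathfrak g$; (c) $\varphi_2(x)-\varphi_1(x)=\lambda_0(\mu(x))-\phi(\lambda_1(x))$ for all $x\in\mathfrak g$.
   Context: A crossed module of Lie algebras: Lie algebras $\mathfrak g,\mathfrak h$, Lie homomorphism $\mu:\mathfrak g\to\mathfrak h$, Lie homomorphism $\mathcal L:\mathfrak h\to\mathrm{Der}(\mathfrak g)$ with $\mu(\mathcal L_yx)=[y,\mu(x)]$, $\mathcal L_{\mu(x_0)}x_1=[x_0,x_1]$. A morphism of crossed modules is a pair of Lie algebra homomorphisms commuting with structure maps and intertwining actions. $\phi:W\to V$ is regarded as a crossed module with abelian brackets and zero action. 2-representation: linear $\rho_0^1:\mathfrak h\to\mathfrak{gl}(W)$, $\rho_0^0:\mathfrak h\to\mathfrak{gl}(V)$, $\rho_1:\mathfrak g\to\mathrm{Hom}(V,W)$ with $\rho_0^1,\rho_0^0$ representations, $\phi\rho_0^1(y)=\rho_0^0(y)\phi$, $\rho_1([x_0,x_1])=\rho_1(x_0)\phi\rho_1(x_1)-\rho_1(x_1)\phi\rho_1(x_0)$, $\rho_0^0(\mu(x))=\phi\rho_1(x)$, $\rho_0^1(\mu(x))=\rho_1(x)\phi$, $\rho_1(\mathcal L_yx)=\rho_0^1(y)\rho_1(x)-\rho_1(x)\rho_0^0(y)$.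 A 2-extension of $\mathfrak g\xrightarrow{\mu}\mathfrak h$ by $W\xrightarrow{\phi}V$ is a crossed module $\mathfrak e_1\to\mathfrak e_0$ with crossed module morphisms $(W\to V)\to(\mathfrak e_1\to\mathfrak e_0)\to(\mathfrak g\to\mathfrak h)$ giving short exact sequences $0\to W\to\mathfrak e_1\to\mathfrak g\to0$ and $0\to V\to\mathfrak e_0\to\mathfrak h\to0$. Two extensions are equivalent if there is an isomorphism of crossed modules between their middle terms commuting with the inclusions and projections. *)

(* Defs.v *)
From HB Require Import structures.
From mathcomp Require Import all_boot all_algebra.
Set Implicit Arguments. Unset Strict Implicit. Unset Printing Implicit Defensive.
Import GRing.Theory.
Local Open Scope ring_scope.

Section Defs.
Variable K : fieldType.

Definition lin (U V : lmodType K) (f : U -> V) : Prop :=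
  forall (a : K) (u v : U), f (a *: u + v) = a *: f u + f v.

Definition bilin (U1 U2 V : lmodType K) (f : U1 -> U2 -> V) : Prop :=
  (forall x, lin (f x)) /\ (forall y, lin (fun x => f x y)).

Record lie_bracket (U : lmodType K) (br : U -> U -> U) : Prop := {
  lb_bilin : bilin br;
  lb_alt : forall x, br x x = 0;
  lb_jacobi : forall x y z, br x (br y z) + br y (br z x) + br z (br x y) = 0 }.

Definition lie_hom (U U' : lmodType K) (br : U -> U -> U) (br' : U' -> U' -> U')
  (f : U -> U') : Prop :=
  lin f /\ forall x y, f (br x y) = br' (f x) (f y).

Definition derivation (U : lmodType K) (br : U -> U -> U) (D : U -> U) : Prop :=
  lin D /\ forall x y, D (br x y) = br (D x) y + br x (D y).

Record crossed_module (G H : lmodType K) (gbr : G -> G -> G) (hbr : H -> H -> H)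
  (mu : G -> H) (L : H -> G -> G) : Prop := {
  cm_g : lie_bracket gbr;
  cm_h : lie_bracket hbr;
  cm_mu : lie_hom gbr hbr mu;
  cm_der : forall y, derivation gbr (L y);
  cm_Llin : forall x, lin (fun y => L y x);
  cm_Lhom : forall y0 y1 x, L (hbr y0 y1) x = L y0 (L y1 x) - L y1 (L y0 x);
  cm_equiv : forall y x, mu (L y x) = hbr y (mu x);
  cm_peiffer : forall x0 x1, L (mu x0) x1 = gbr x0 x1 }.

Record cm_morphism (G H G' H' : lmodType K)
  (gbr : G -> G -> G) (hbr : H -> H -> H) (mu : G -> H) (L : H -> G -> G)
  (gbr' : G' -> G' -> G') (hbr' : H' -> H' -> H') (mu' : G' -> H') (L' : H' -> G' -> G')
  (f1 : G -> G') (f0 : H -> H') : Prop := {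
  cmm_1 : lie_hom gbr gbr' f1;
  cmm_0 : lie_hom hbr hbr' f0;
  cmm_mu : forall x, mu' (f1 x) = f0 (mu x);
  cmm_act : forall y x, f1 (L y x) = L' (f0 y) (f1 x) }.

(* a linear map phi : W -> V regarded as a crossed module *)
Definition abr (U : lmodType K) : U -> U -> U := fun _ _ => 0.
Definition zact (W V : lmodType K) : V -> W -> W := fun _ _ => 0.

Record two_rep (G H W V : lmodType K) (gbr : G -> G -> G) (hbr : H -> H -> H)
  (mu : G -> H) (L : H -> G -> G) (phi : W -> V)
  (r01 : H -> W -> W) (r00 : H -> V -> V) (r1 : G -> V -> W) : Prop := {
  tr_lin01 : bilin r01;
  tr_lin00 : bilin r00;
  tr_lin1 : bilin r1;
  tr_rep01 : forall y0 y1 w, r01 (hbr y0 y1) w = r01 y0 (r01 y1 w) - r01 y1 (r01 y0 w);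
  tr_rep00 : forall y0 y1 v, r00 (hbr y0 y1) v = r00 y0 (r00 y1 v) - r00 y1 (r00 y0 v);
  tr_phi : forall y w, phi (r01 y w) = r00 y (phi w);
  tr_br : forall x0 x1 v,
      r1 (gbr x0 x1) v = r1 x0 (phi (r1 x1 v)) - r1 x1 (phi (r1 x0 v));
  tr_mu0 : forall x v, r00 (mu x) v = phi (r1 x v);
  tr_mu1 : forall x w, r01 (mu x) w = r1 x (phi w);
  tr_L : forall y x v, r1 (L y x) v = r01 y (r1 x v) - r1 x (r00 y v) }.

Record ext_data (W V G H E1 E0 : lmodType K) := ExtData {
  e1br : E1 -> E1 -> E1;
  e0br : E0 -> E0 -> E0;
  eeps : E1 -> E0;
  eact : E0 -> E1 -> E1;
  einc1 : W -> E1;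
  einc0 : V -> E0;
  epr1 : E1 -> G;
  epr0 : E0 -> H }.

Definition exact_at (A B C : lmodType K) (i : A -> B) (p : B -> C) : Prop :=
  [/\ injective i, (forall c, exists b, p b = c)
    & forall b, p b = 0 <-> exists a, i a = b].

Record two_extension (W V G H E1 E0 : lmodType K) (phi : W -> V)
  (gbr : G -> G -> G) (hbr : H -> H -> H) (mu : G -> H) (L : H -> G -> G)
  (D : ext_data W V G H E1 E0) : Prop := {
  te_cm : crossed_module (e1br D) (e0br D) (eeps D) (eact D);
  te_inc : cm_morphism (@abr W) (@abr V) phi (@zact W V)
             (e1br D) (e0br D) (eeps D) (eact D) (einc1 D) (einc0 D);
  te_pr : cm_morphism (e1br D) (e0br D) (eeps D) (eact D)
             gbr hbr mu L (epr1 D) (epr0 D);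
  te_ex1 : exact_at (einc1 D) (epr1 D);
  te_ex0 : exact_at (einc0 D) (epr0 D) }.

Definition ext_equiv (W V G H E1 E0 E1' E0' : lmodType K)
  (D : ext_data W V G H E1 E0) (D' : ext_data W V G H E1' E0') : Prop :=
  exists (F1 : E1 -> E1') (F0 : E0 -> E0'),
    [/\ bijective F1, bijective F0,
        cm_morphism (e1br D) (e0br D) (eeps D) (eact D)
                    (e1br D') (e0br D') (eeps D') (eact D') F1 F0,
        (forall w, F1 (einc1 D w) = einc1 D' w) /\ (forall v, F0 (einc0 D v) = einc0 D' v)
      & (forall e, epr1 D' (F1 e) = epr1 D e) /\ (forall e, epr0 D' (F0 e) = epr0 D e)].

Definition std_ext (G H W V : lmodType K) (gbr : G -> G -> G) (hbr : H -> H -> H)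
  (mu : G -> H) (L : H -> G -> G) (phi : W -> V)
  (r01 : H -> W -> W) (r00 : H -> V -> V) (r1 : G -> V -> W)
  (omega : H -> H -> V) (alpha : H -> G -> W) (varphi : G -> V)
  : ext_data W V G H (G * W)%type (H * V)%type :=
  ExtData
    (fun a b : G * W => (gbr a.1 b.1,
        r01 (mu a.1) b.2 - r01 (mu b.1) a.2
        - (r1 b.1 (varphi a.1) + alpha (mu a.1) b.1)))
    (fun a b : H * V => (hbr a.1 b.1, r00 a.1 b.2 - r00 b.1 a.2 - omega a.1 b.1))
    (fun a : G * W => (mu a.1, phi a.2 + varphi a.1))
    (fun (b : H * V) (a : G * W) => (L b.1 a.1, r01 b.1 a.2 - r1 a.1 b.2 - alpha b.1 a.1))
    (fun w : W => (0 : G, w))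
    (fun v : V => (0 : H, v))
    (fun a : G * W => a.1)
    (fun b : H * V => b.1).

End Defs.

(* Main.v *)
Require Import Defs.
From mathcomp Require Import all_boot all_algebra.
Set Implicit Arguments. Unset Strict Implicit. Unset Printing Implicit Defensive.
Import GRing.Theory.
Local Open Scope ring_scope.

Section Helpers.
Variable K : fieldType.
Variables U V : lmodType K.
Variable f : U -> V.
Hypothesis hf : lin f.

Lemma linD u v : f (u + v) = f u + f v.
Proof. by rewrite -{1}[u]scale1r hf scale1r. Qed.
Lemma lin0 : f 0 = 0.
Proof. have E := linD 0 0; rewrite addr0 in E. apply: (addrI (f 0)); by rewrite addr0 -E. Qed.
Lemma linN u : f (- u) = - f u.
Proof. have := linD u (-u); rewrite subrr lin0 => /esym E; apply: (addrI (f u)); by rewrite E subrr. Qed.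
Lemma linB u v : f (u - v) = f u - f v.
Proof. by rewrite linD linN. Qed.
Lemma linZ a u : f (a *: u) = a *: f u.
Proof. by rewrite -[a *: u]addr0 hf lin0 addr0. Qed.
End Helpers.

Section Z. Variable Z : zmodType.
Lemma id_e0 (a b c d p q : Z) : a - b - c + d = (a + p) - (b + q) - (c + (p - q - d)).
Proof.
rewrite opprD addrACA [c + _]addrC -[p - q - d + c]addrA addrKA opprD opprK.
by rewrite addrAC -addrA.
Qed.
Lemma id_act (a b c d p q : Z) : a - b - c + d = (a + p) - (b + q) - (c + (p - d - q)).
Proof. by rewrite [p - d - q]addrAC -id_e0. Qed.
Lemma id_e1 (a b c d e p q s : Z) :
  a - b - (c + d) + e = (a + p) - (b + q) - ((c + (s - q)) + (d + (p - e - s))).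
Proof.
apply: esym.
rewrite opprD addrACA [(c + _) + _]addrACA [(s - q) + _]addrC [(p - e - s) + _]addrA subrK.
rewrite [p - e - q]addrAC [(c + d) + _]addrC -[p - q - e + _]addrA addrKA opprD opprK.
by rewrite [in RHS]addrAC -addrA.
Qed.
Lemma id_mu (f g c d : Z) : f + g + (c + (d - g)) = f + c + d.
Proof. by rewrite addrACA [g + _]addrCA subrr addr0. Qed.
End Z.

Lemma pairE (A B : Type) (a a' : A) (b b' : B) : a = a' -> b = b' -> (a, b) = (a', b').
Proof. by move=> -> ->. Qed.

Theorem mainTheorem17 (K : fieldType) (G H W V : lmodType K)
  (gbr : G -> G -> G) (hbr : H -> H -> H) (mu : G -> H) (L : H -> G -> G)
  (phi : W -> V) (r01 : H -> W -> W) (r00 : H -> V -> V) (r1 : G -> V -> W)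
  (omega1 omega2 : H -> H -> V) (alpha1 alpha2 : H -> G -> W)
  (varphi1 varphi2 : G -> V) :
  crossed_module gbr hbr mu L ->
  lin phi ->
  two_rep gbr hbr mu L phi r01 r00 r1 ->
  bilin omega1 -> (forall y, omega1 y y = 0) ->
  bilin omega2 -> (forall y, omega2 y y = 0) ->
  bilin alpha1 -> bilin alpha2 ->
  lin varphi1 -> lin varphi2 ->
  two_extension phi gbr hbr mu L
    (std_ext gbr hbr mu L phi r01 r00 r1 omega1 alpha1 varphi1) ->
  two_extension phi gbr hbr mu L
    (std_ext gbr hbr mu L phi r01 r00 r1 omega2 alpha2 varphi2) ->
  (ext_equiv (std_ext gbr hbr mu L phi r01 r00 r1 omega1 alpha1 varphi1)
             (std_ext gbr hbr mu L phi r01 r00 r1 omega2 alpha2 varphi2)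
   <->
   exists (lam0 : H -> V) (lam1 : G -> W),
     [/\ lin lam0, lin lam1,
       (forall y0 y1, omega2 y0 y1 - omega1 y0 y1
          = r00 y0 (lam0 y1) - r00 y1 (lam0 y0) - lam0 (hbr y0 y1)),
       (forall y x, alpha2 y x - alpha1 y x
          = r01 y (lam1 x) - lam1 (L y x) - r1 x (lam0 y))
     & (forall x, varphi2 x - varphi1 x = lam0 (mu x) - phi (lam1 x))]).
Proof.
move=> CM Lphi TR [o1l o1r] o1a [o2l o2r] o2a [a1l a1r] [a2l a2r] Lv1 Lv2 _ _.
have [_ _ [Lmu _] _ _ _ _ Hpf] := CM.
have [[r01l r01r] [r00l r00r] [r1l r1r] _ _ _ _ _ Hmu1 _] := TR.
split.
- move=> [F1 [F0 [_ _ [[LF1 hom1] [LF0 hom0] hmu hact] [inc1 inc0] [pr1 pr0]]]].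
  rewrite /= in hom1 hom0 hmu hact inc1 inc0 pr1 pr0.
  pose l0 := fun y => (F0 (y, 0)).2.
  pose l1 := fun x => (F1 (x, 0)).2.
  have EF0 : forall y v, F0 (y, v) = (y, v + l0 y).
    move=> y v.
    have -> : (y, v) = (y, 0) + (0, v) by exact: (congr2 pair (esym (addr0 y)) (esym (add0r v))).
    rewrite (linD LF0) inc0 /l0; case E: (F0 (y, 0)) => [a b] /=.
    have := pr0 (y, 0); rewrite E /= => ->; exact: (congr2 pair (addr0 y) (addrC b v)).
  have EF1 : forall x w, F1 (x, w) = (x, w + l1 x).
    move=> x w.
    have -> : (x, w) = (x, 0) + (0, w) by exact: (congr2 pair (esym (addr0 x)) (esym (add0r w))).
    rewrite (linD LF1) inc1 /l1; case E: (F1 (x, 0)) => [a b] /=.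
    have := pr1 (x, 0); rewrite E /= => ->; exact: (congr2 pair (addr0 x) (addrC b w)).
  exists l0, l1; split.
  + move=> a u v; rewrite /l0.
    have -> : (a *: u + v, 0 : V) = a *: (u, 0) + (v, 0) by exact: (congr2 pair (erefl _) (esym (etrans (congr1 (fun t => t + 0) (scaler0 _ a)) (addr0 0)))).
    by rewrite LF0.
  + move=> a u v; rewrite /l1.
    have -> : (a *: u + v, 0 : W) = a *: (u, 0) + (v, 0) by exact: (congr2 pair (erefl _) (esym (etrans (congr1 (fun t => t + 0) (scaler0 _ a)) (addr0 0)))).
    by rewrite LF1.
  + move=> y0 y1; have := hom0 (y0, 0) (y1, 0); rewrite /= !EF0 => -[].
    rewrite !add0r !(lin0 (r00l _)) subrr sub0r; move=> E.
    have Eb : r00 y0 (l0 y1) = - omega1 y0 y1 + l0 (hbr y0 y1) + omega2 y0 y1 + r00 y1 (l0 y0).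
      by rewrite E subrK subrK.
    by rewrite Eb addrK addrAC addrK addrC.
  + move=> y x; have := hact (y, 0) (x, 0); rewrite /= EF0 !EF1 => -[].
    rewrite !add0r (lin0 (r01l _)) (lin0 (r1l _)) subrr sub0r; move=> E.
    have Eb : r01 y (l1 x) = - alpha1 y x + l1 (L y x) + alpha2 y x + r1 x (l0 y).
      by rewrite E subrK subrK.
    by rewrite Eb addrAC addrK addrAC addrK addrC.
  + move=> x; have := hmu (x, 0); rewrite /= EF0 !EF1 => -[].
    rewrite !add0r (lin0 Lphi) add0r; move=> E.
    have Eb : l0 (mu x) = phi (l1 x) + varphi2 x - varphi1 x.
      by rewrite E addrC addKr.
    by rewrite Eb addrAC [phi _ + _]addrC addrK.
- move=> [l0 [l1 [Ll0 Ll1 Ha Hb Hc]]].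
  have A2 : forall y x, alpha2 y x = alpha1 y x + (r01 y (l1 x) - l1 (L y x) - r1 x (l0 y)).
    by move=> y x; rewrite -Hb addrC subrK.
  have V2 : forall x, varphi2 x = varphi1 x + (l0 (mu x) - phi (l1 x)).
    by move=> x; rewrite -Hc addrC subrK.
  have O2 : forall y0 y1, omega2 y0 y1 = omega1 y0 y1 + (r00 y0 (l0 y1) - r00 y1 (l0 y0) - l0 (hbr y0 y1)).
    by move=> y0 y1; rewrite -Ha addrC subrK.
  exists (fun a : G * W => (a.1, a.2 + l1 a.1)), (fun b : H * V => (b.1, b.2 + l0 b.1)).
  split.
  + exists (fun a : G * W => (a.1, a.2 - l1 a.1)); case=> x w /=; by rewrite ?addrK ?subrK.
  + exists (fun b : H * V => (b.1, b.2 - l0 b.1)); case=> x w /=; by rewrite ?addrK ?subrK.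
  + split.
    * split.
      - move=> a [x w] [x' w'] /=; apply: pairE => //=.
        by rewrite Ll1 scalerDr addrACA.
      - move=> [x0 w0] [x1 w1] /=; apply: pairE => //=.
        rewrite A2 V2 /= (linD (r01l (mu x0))) (linD (r01l (mu x1))).
        rewrite (linD (r1l x1)) (linB (r1l x1)) -Hmu1 Hpf.
        exact: id_e1.
    * split.
      - move=> a [x w] [x' w'] /=; apply: pairE => //=.
        by rewrite Ll0 scalerDr addrACA.
      - move=> [x0 w0] [x1 w1] /=; apply: pairE => //=.
        rewrite O2 /= (linD (r00l x0)) (linD (r00l x1)).
        exact: id_e0.
    * move=> [x w] /=; apply: pairE => //=.
      rewrite V2 (linD Lphi); exact: id_mu.
    * move=> [y v] [x w] /=; apply: pairE => //=.
      rewrite A2 (linD (r01l y)) (linD (r1l x)); exact: id_act.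
  + by split=> ? /=; rewrite ?(lin0 Ll1) ?(lin0 Ll0) addr0.
  + by [].
Qed.
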